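(* Fix $K\in\mathbb{N}$, and let $O=\{A_1,\dots,A_n\}\in\Omega_{n,n+K}$. Then: (1) For every $i$, $|A_i|\leq K+1$. (2) $|\{i\in[n]: |A_i|\geq 2\}|\leq K$. (3) Fix $\mu\vdash 4K$ and let $n\geq 3K$. For every standard tableau $T$ of shape $\mu^{(n-3K)}$, the monomials $m_i:=\mathrm{Sub}^T_{(x,y)}(x_{A_i})$ (so that $\mathrm{Sub}^T_{(x,y)}(P_O)=P_n(m_1,\dots,m_n)$) satisfy: (i) $|m_i|\leq K+1$ for every $i$; (ii) $|\{i\in[n]:|m_i|\geq 2\}|\leq K$; (iii) $|\{i\in[n]: m_i\neq y_1\}|\leq 16K^2$.
   Context: $\Omega_{n,m}$ is the set of ordered partitions $O=\{A_1,\dots,A_n\}$ of $[m]=\{1,\dots,m\}$ into $n$ nonempty ordered lists $A_i$ whose underlying sets are pairwise disjoint with union $[m]$; $|A_i|$ is the length of $A_i$. For $A=[\![ab\cdots c]\!]$, $x_A=x_ax_b\cdots x_c$; $P_n(z_1,\dots,z_n)=\sum_{\sigma\in S_n}z_{\sigma(1)}\cdots z_{\sigma(n)}$ and $P_O=P_n(x_{A_1},\dots,x_{A_n})$. For $\nu=(\nu_1,\dots,\nu_r)$, $\nu^{(s)}=(\nu_1+s,\nu_2,\dots,\nu_r)$. A standard tableau $T$ of shape $\nu\vdash m$ is the Young diagram of $\nu$ filled with $1,\dots,m$ increasing along rows and columns; $\mathrm{Sub}^T_{(x,y)}$ is the algebra homomorphism $x_j\mapsto y_{i_j}$ into the free algebra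 on $Y=\{y_1,y_2,\dots\}$, $i_j$ being the row of $T$ containing $j$. $|m|$ denotes the length of a monomial $m$. *)

(* Defs.v *)
From mathcomp Require Import all_boot.
Set Implicit Arguments. Unset Strict Implicit. Unset Printing Implicit Defensive.

(* The
   condition that the underlying sets are pairwise disjoint (and the lists are
   orderings of their underlying sets) with union [m] is expressed by saying
   that the concatenation of the lists is a permutation of 1,...,m. *)
Definition ordered_partition (n m : nat) (O : seq (seq nat)) : Prop :=
  [/\ size O = n, all (fun A => A != [::]) O & perm_eq (flatten O) (iota 1 m)].

Definition is_partition_of (nu : seq nat) (m : nat) : Prop :=
  [/\ sorted geq nu, all (fun p => 0 < p) nu & sumn nu = m].

(* nu^(s) = (nu_1 + s, nu_2, ..., nu_r); for the empty partition we take (s). *)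
Definition shift_first (s : nat) (nu : seq nat) : seq nat :=
  match nu with
  | [::] => [:: s]
  | a :: t => (a + s) :: t
  end.

Definition standard_tableau (nu : seq nat) (T : seq (seq nat)) : Prop :=
  [/\ map size T = nu,
      perm_eq (flatten T) (iota 1 (sumn nu)),
      all (sorted ltn) T &
      forall i j, j < size (nth [::] T i.+1) ->
        nth 0 (nth [::] T i) j < nth 0 (nth [::] T i.+1) j].

Definition row_of (T : seq (seq nat)) (j : nat) : nat :=
  (find (fun r => j \in r) T).+1.

(* Monomials in the free algebra on Y = {y_1, y_2, ...} are words, represented
   as sequences of indices: the word y_{a} y_{b} ... y_{c} is [:: a; b; ...; c].  Sub^T_{(x,y)} applied to x_A = x_a x_b ... x_c
   gives y_{i_a} y_{i_b} ... y_{i_c}. *)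
Definition SubT (T : seq (seq nat)) (A : seq nat) : seq nat := map (row_of T) A.

Definition y1 : seq nat := [:: 1].

(* Main.v *)
Require Import Defs.
From mathcomp Require Import all_boot.
From mathcomp Require Import zify.

Lemma L1 (s : seq (seq nat)) : all (fun A => A != [::]) s ->
  size s + count (fun A => 2 <= size A) s <= sumn (map size s).
Proof.
elim: s => [|A s IH] //= /andP [hA hs].
have := IH hs; case: A hA => [|a [|b t]] //= _; lia.
Qed.

Lemma L2 (s : seq (seq nat)) : all (fun A => A != [::]) s ->
  forall i, i < size s -> size (nth [::] s i) + (size s).-1 <= sumn (map size s).
Proof.
elim: s => [|A s IH] //= /andP [hA hs] [|i] /= hi.
- have := L1 s hs. case: A hA => [|a t] //= _; lia.
- have := IH hs i hi. case: A hA => [|a t] //= _. case: (size s) hi => //=. lia.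
Qed.

Lemma L3 T0 rest (s : seq (seq nat)) : all (fun A => A != [::]) s ->
  count (fun m => m != y1) (map (SubT (T0 :: rest)) s) <=
  count (fun A => 2 <= size A) s + count (predC (mem T0)) (flatten s).
Proof.
elim: s => [|A s IH] //= /andP [hA hs].
rewrite count_cat.
have := IH hs.
case: A hA => [|a [|b t]] //= _.
- rewrite /SubT /= /row_of /= /y1.
  case: (a \in T0) => /=; lia.
- lia.
Qed.

Theorem proposition4p28 (K n : nat) (O : seq (seq nat)) :
  ordered_partition n (n + K) O ->
  [/\ (forall i, i < n -> size (nth [::] O i) <= K.+1),
      count (fun A => 2 <= size A) O <= K &
      forall mu : seq nat, is_partition_of mu (4 * K) -> 3 * K <= n ->
      forall T : seq (seq nat), standard_tableau (shift_first (n - 3 * K) mu) T ->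
        let ms := map (SubT T) O in
        [/\ (forall i, i < n -> size (nth [::] ms i) <= K.+1),
            count (fun m => 2 <= size m) ms <= K &
            count (fun m => m != y1) ms <= 16 * K ^ 2]].
Proof.
case=> hsz hne hperm.
have hsum : sumn (map size O) = n + K.
  by rewrite -size_flatten (perm_size hperm) size_iota.
have P1 : forall i, i < n -> size (nth [::] O i) <= K.+1.
  move=> i hi; have := L2 O hne i; rewrite hsz hsum => /(_ hi); lia.
have P2 : count (fun A => 2 <= size A) O <= K.
  have := L1 O hne; rewrite hsz hsum; lia.
split => // mu [_ _ hmu] h3K T [hshape hTperm _ _] ms.
have hms : forall i, nth [::] ms i = SubT T (nth [::] O i).
  move=> i; rewrite /ms; case: (ltnP i (size O)) => hi.
  - by rewrite (nth_map [::]).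
  - by rewrite !nth_default ?size_map.
split.
- by move=> i hi; rewrite hms /SubT size_map; exact: P1.
- by rewrite /ms count_map; apply: leq_trans P2; apply: sub_count => A /=; rewrite /SubT size_map.
rewrite /ms; clear hms ms.
case: T hshape hTperm => [|T0 rest] hshape hTperm.
  by case: mu hmu hTperm hshape.
have hL3 := L3 T0 rest O hne.
have hc : count (predC (mem T0)) (flatten O) <= 4 * K.
  have hs : sumn (shift_first (n - 3 * K) mu) = n + K.
    by move: hmu; case: (mu) => [|a t] /= hm; lia.
  rewrite hs in hTperm.
  rewrite (permP hperm) -(permP hTperm) /= count_cat.
  have -> : count (predC (mem T0)) T0 = 0.
    by apply/eqP; rewrite -leqn0 leqNgt -has_count; apply/hasP => -[x hx /=]; rewrite hx.
  apply: leq_trans (count_size _ _) _.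
  rewrite size_flatten /shape.
  have -> : map size rest = behead (shift_first (n - 3 * K) mu) by rewrite -hshape.
  move: hmu; case: (mu) => [|a t] /= hmu; lia.
have : K + 4 * K <= 16 * K ^ 2 by nia.
lia.
Qed.
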